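(* Let $\mathbb{C}$ be a pointed protomodular category and let $X$ be an object of $\mathbb{C}$ such that the generic split extension with kernel $X$ exists. Then the following two conditions are equivalent: (1) there is a generic split extension with kernel $[X]$ and the conjugation morphism $c_X:X\to[X]$ is a characteristic monomorphism; (2) $X$ has trivial center and $[X]$ is strong-complete.
   Context: $\mathbb{C}$ is pointed with finite limits; protomodular means the split short five lemma holds. A split extension is $X\xrightarrow{\kappa}A\underset{\beta}{\overset{\alpha}{\rightleftarrows}}B$ with $\alpha\beta=1_B$, $\kappa$ a kernel of $\alpha$. A generic split extension with kernel $X$, written $X\xrightarrow{k}[X]\ltimes X\underset{i}{\overset{p_1}{\rightleftarrows}}[X]$, is a terminal object in the category of split extensions with kernel $X$ and morphisms whose kernel component is $1_X$. The conjugation morphism $c_X:X\to[X]$ is the codomain component of the unique such morphism from $X\xrightarrow{\langle0,1\rangle}X\times X\underset{\langle1,1\rangle}{\overset{\pi_1}{\rightleftarrows}}X$ to the generic one. The center of $X$ is the terminal object among morphisms $g:B\to X$ commuting with $1_X$ (some $\varphi:B\times X\to X$ has $\varphi\langle1,0\rangle=g$, $\varphi\langle0,1\rangle=1_X$); trivial center means it is $0$. A protosplit monomorphism is a kernel of a split epimorphism; an object is strong-complete if every protosplit monomorphism with domain it is a split monomorphism with a unique retraction. A monomorphism $m:S\to Y$ is Bourn-normal if there is an equivalence relation $(R,r_1,r_2)$ on $Y$ and $\tilde m:S\times S\to R$ with $r_1\tilde m=m\pi_1$, $r_2\tilde m=m\pi_2$ and the square $r_1\tilde m=m\pi_1$ a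 pullback. A morphism $u:S\to X$ is a characteristic monomorphism if for every Bourn-normal monomorphism $n:X\to Y$ the composite $nu$ is a Bourn-normal monomorphism. *)

(* Defs.v *)
Set Implicit Arguments.
Unset Strict Implicit.

Record Cat := {
  ob :> Type;
  hom : ob -> ob -> Type;
  idm : forall a, hom a a;
  comp : forall a b c, hom b c -> hom a b -> hom a c;
  comp_idl : forall a b (f : hom a b), comp (idm b) f = f;
  comp_idr : forall a b (f : hom a b), comp f (idm a) = f;
  comp_assoc : forall a b c d (h : hom c d) (g : hom b c) (f : hom a b),
      comp h (comp g f) = comp (comp h g) f
}.
Arguments hom {_} _ _.
Arguments idm {_} _.
Arguments comp {_ _ _ _} _ _.
Notation "g ∘ f" := (comp g f) (at level 40, left associativity).

Section CatDefs.
Context {C : Cat}.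

Definition is_zero (z : C) : Prop :=
  forall a : C, (exists! f : hom z a, True) /\ (exists! f : hom a z, True).
Definition is_zero_mor {a b : C} (f : hom a b) : Prop :=
  exists z : C, is_zero z /\ exists (u : hom a z) (v : hom z b), f = v ∘ u.
Definition is_terminal (t : C) : Prop := forall a : C, exists! f : hom a t, True.

Definition is_iso {a b : C} (f : hom a b) : Prop :=
  exists g : hom b a, g ∘ f = idm a /\ f ∘ g = idm b.
Definition is_mono {s y : C} (m : hom s y) : Prop :=
  forall z (f g : hom z s), m ∘ f = m ∘ g -> f = g.

Definition is_pullback {a b c p : C} (f : hom a c) (g : hom b c)
    (pa : hom p a) (pb : hom p b) : Prop :=
  f ∘ pa = g ∘ pb /\
  forall q (qa : hom q a) (qb : hom q b), f ∘ qa = g ∘ qb ->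
    exists! h : hom q p, pa ∘ h = qa /\ pb ∘ h = qb.

Definition is_product {p a b : C} (pa : hom p a) (pb : hom p b) : Prop :=
  forall q (qa : hom q a) (qb : hom q b),
    exists! h : hom q p, pa ∘ h = qa /\ pb ∘ h = qb.

Definition is_kernel {k a b : C} (kk : hom k a) (f : hom a b) : Prop :=
  is_zero_mor (f ∘ kk) /\
  forall q (g : hom q a), is_zero_mor (f ∘ g) -> exists! h : hom q k, kk ∘ h = g.

Definition is_split_ext {x a b : C} (kappa : hom x a) (alpha : hom a b)
    (beta : hom b a) : Prop :=
  alpha ∘ beta = idm b /\ is_kernel kappa alpha.

Definition is_generic_split_ext {x gx sx : C} (k : hom x sx) (p1 : hom sx gx)
    (i : hom gx sx) : Prop :=
  is_split_ext k p1 i /\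
  forall (a b : C) (kappa : hom x a) (alpha : hom a b) (beta : hom b a),
    is_split_ext kappa alpha beta ->
    exists! vw : hom a sx * hom b gx,
      fst vw ∘ kappa = k /\ p1 ∘ fst vw = snd vw ∘ alpha /\
      fst vw ∘ beta = i ∘ snd vw.

(* c is the conjugation morphism: codomain component of the unique morphism
   from  x --<0,1>--> x*x <==pi1,<1,1>==> x  to the generic split extension *)
Definition is_conjugation {x gx sx : C} (k : hom x sx) (p1 : hom sx gx)
    (i : hom gx sx) (c : hom x gx) : Prop :=
  exists (p : C) (q1 q2 : hom p x), is_product q1 q2 /\
  exists (d01 dd : hom x p) (v : hom p sx),
    is_zero_mor (q1 ∘ d01) /\ q2 ∘ d01 = idm x /\
    q1 ∘ dd = idm x /\ q2 ∘ dd = idm x /\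
    v ∘ d01 = k /\ p1 ∘ v = c ∘ q1 /\ v ∘ dd = i ∘ c.

Definition commutes {b y x : C} (g : hom b x) (f : hom y x) : Prop :=
  exists (p : C) (pb : hom p b) (py : hom p y), is_product pb py /\
  exists (phi : hom p x) (l : hom b p) (r : hom y p),
    pb ∘ l = idm b /\ is_zero_mor (py ∘ l) /\
    is_zero_mor (pb ∘ r) /\ py ∘ r = idm y /\
    phi ∘ l = g /\ phi ∘ r = f.

Definition is_center {z x : C} (g : hom z x) : Prop :=
  commutes g (idm x) /\
  forall b (h : hom b x), commutes h (idm x) -> exists! t : hom b z, g ∘ t = h.

Definition trivial_center (x : C) : Prop :=
  exists (z : C) (g : hom z x), is_zero z /\ is_center g.

Definition is_protosplit_mono {s y : C} (m : hom s y) : Prop :=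
  exists (b : C) (alpha : hom y b) (beta : hom b y),
    alpha ∘ beta = idm b /\ is_kernel m alpha.

Definition strong_complete (x : C) : Prop :=
  forall y (m : hom x y), is_protosplit_mono m -> exists! r : hom y x, r ∘ m = idm x.

Definition jointly_monic {r y : C} (r1 r2 : hom r y) : Prop :=
  forall z (f g : hom z r), r1 ∘ f = r1 ∘ g -> r2 ∘ f = r2 ∘ g -> f = g.

Definition is_equiv_rel {r y : C} (r1 r2 : hom r y) : Prop :=
  jointly_monic r1 r2 /\
  (exists d : hom y r, r1 ∘ d = idm y /\ r2 ∘ d = idm y) /\
  (exists s : hom r r, r1 ∘ s = r2 /\ r2 ∘ s = r1) /\
  (forall p (q1 q2 : hom p r), is_pullback r2 r1 q1 q2 ->
     exists t : hom p r, r1 ∘ t = r1 ∘ q1 /\ r2 ∘ t = r2 ∘ q2).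

Definition is_bourn_normal {s y : C} (m : hom s y) : Prop :=
  is_mono m /\
  exists (r : C) (r1 r2 : hom r y), is_equiv_rel r1 r2 /\
  exists (p : C) (p1 p2 : hom p s), is_product p1 p2 /\
  exists mt : hom p r,
    r1 ∘ mt = m ∘ p1 /\ r2 ∘ mt = m ∘ p2 /\ is_pullback r1 m mt p1.

Definition is_characteristic_mono {s x : C} (u : hom s x) : Prop :=
  forall y (n : hom x y), is_bourn_normal n -> is_bourn_normal (n ∘ u).

End CatDefs.

Definition pointed (C : Cat) : Prop := exists z : C, is_zero z.

Definition has_finite_limits (C : Cat) : Prop :=
  (exists t : C, is_terminal t) /\
  forall (a b c : C) (f : hom a c) (g : hom b c),
    exists (p : C) (pa : hom p a) (pb : hom p b), is_pullback f g pa pb.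

(* split short five lemma *)
Definition protomodular (C : Cat) : Prop :=
  forall (x a b x' a' b' : C) (kappa : hom x a) (alpha : hom a b) (beta : hom b a)
    (kappa' : hom x' a') (alpha' : hom a' b') (beta' : hom b' a')
    (u : hom x x') (v : hom a a') (w : hom b b'),
    is_split_ext kappa alpha beta -> is_split_ext kappa' alpha' beta' ->
    v ∘ kappa = kappa' ∘ u -> alpha' ∘ v = w ∘ alpha -> v ∘ beta = beta' ∘ w ->
    is_iso u -> is_iso w -> is_iso v.

(* Main.v *)
Require Import Defs.
From Stdlib Require Import ClassicalEpsilon.

Section Basics.
Context {C : Cat}.

Lemma post {b c d : C} {f : hom c d} {g : hom b c} {h : hom b d} :
  f ∘ g = h -> forall e (x : hom e b), f ∘ (g ∘ x) = h ∘ x.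
Proof. intros H e x. rewrite comp_assoc, H. reflexivity. Qed.

Lemma post3 {b c d e : C} {f : hom d e} {g : hom c d} {g' : hom b c} {h : hom b e} :
  f ∘ (g ∘ g') = h -> forall e' (x : hom e' b), f ∘ (g ∘ (g' ∘ x)) = h ∘ x.
Proof. intros H e' x. rewrite (comp_assoc g g' x), comp_assoc, H. reflexivity. Qed.

Lemma zero_out {z a : C} : is_zero z -> forall f g : hom z a, f = g.
Proof. intros H f g. destruct (proj1 (H a)) as [x [_ Hx]].
  rewrite <- (Hx f I), <- (Hx g I). reflexivity. Qed.
Lemma zero_in {z a : C} : is_zero z -> forall f g : hom a z, f = g.
Proof. intros H f g. destruct (proj2 (H a)) as [x [_ Hx]].
  rewrite <- (Hx f I), <- (Hx g I). reflexivity. Qed.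
Lemma zero_out_ex {z : C} (a : C) : is_zero z -> exists f : hom z a, True.
Proof. intros H. destruct (proj1 (H a)) as [x _]. eauto. Qed.
Lemma zero_in_ex {z : C} (a : C) : is_zero z -> exists f : hom a z, True.
Proof. intros H. destruct (proj2 (H a)) as [x _]. eauto. Qed.

End Basics.

Ltac norm := repeat rewrite <- comp_assoc; repeat rewrite comp_idl; repeat rewrite comp_idr.
Ltac normin H := repeat rewrite <- comp_assoc in H; repeat rewrite comp_idl in H; repeat rewrite comp_idr in H.

Section Zero.
Context {C : Cat} (Z0 : C) (HZ : is_zero Z0).

Definition zto (a : C) : hom Z0 a :=
  proj1_sig (constructive_indefinite_description _ (zero_out_ex a HZ)).
Definition zfrom (a : C) : hom a Z0 :=
  proj1_sig (constructive_indefinite_description _ (zero_in_ex a HZ)).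
Definition zm (a b : C) : hom a b := zto b ∘ zfrom a.

Lemma zm_is (a b : C) : is_zero_mor (zm a b).
Proof. exists Z0. split; [exact HZ|]. exists (zfrom a), (zto b). reflexivity. Qed.

Lemma zmor_eq {a b : C} (f : hom a b) : is_zero_mor f -> f = zm a b.
Proof.
  intros [z [Hz [u [v ->]]]]. unfold zm.
  destruct (zero_out_ex Z0 Hz) as [t _].
  rewrite (zero_out Hz v (zto b ∘ t)).
  rewrite <- comp_assoc. f_equal. apply (zero_in HZ).
Qed.

Lemma zm_l {a b c : C} (f : hom a b) : zm b c ∘ f = zm a c.
Proof. apply zmor_eq. unfold zm. exists Z0. split; [exact HZ|].
  exists (zfrom b ∘ f), (zto c). symmetry; apply comp_assoc. Qed.
Lemma zm_r {a b c : C} (f : hom b c) : f ∘ zm a b = zm a c.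
Proof. apply zmor_eq. unfold zm. exists Z0. split; [exact HZ|].
  exists (zfrom a), (f ∘ zto b). apply comp_assoc. Qed.

Lemma zmor_of {a b : C} (f : hom a b) : f = zm a b -> is_zero_mor f.
Proof. intros ->. apply zm_is. Qed.

Lemma zm_Z0 : zm Z0 Z0 = idm Z0.
Proof. apply (zero_out HZ). Qed.

Lemma into_Z0 {a : C} (f g : hom a Z0) : f = g.
Proof. apply (zero_in HZ). Qed.
Lemma from_Z0 {a : C} (f g : hom Z0 a) : f = g.
Proof. apply (zero_out HZ). Qed.

End Zero.

Ltac zsimp := norm; repeat (rewrite zm_l || rewrite zm_r); norm.
Ltac zsimpin H := normin H; repeat (rewrite zm_l in H || rewrite zm_r in H); normin H.

Section Gen.
Context {C : Cat} (Z0 : C) (HZ : is_zero Z0)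
  (HPB : forall (a b c : C) (f : hom a c) (g : hom b c),
    exists (p : C) (pa : hom p a) (pb : hom p b), is_pullback f g pa pb)
  (HP : protomodular C).

Notation "0m" := (zm Z0 HZ _ _).
Lemma zeq {a b : C} (f : hom a b) : is_zero_mor f -> f = 0m.
Proof. apply zmor_eq. Qed.
Lemma zof {a b : C} (f : hom a b) : f = 0m -> is_zero_mor f.
Proof. apply zmor_of. Qed.
Lemma zis {a b : C} : is_zero_mor (zm Z0 HZ a b).
Proof. apply zm_is. Qed.

Ltac zs := norm; repeat (rewrite (zm_l Z0 HZ) || rewrite (zm_r Z0 HZ)); norm.
Ltac zsin H := normin H; repeat (rewrite (zm_l Z0 HZ) in H || rewrite (zm_r Z0 HZ) in H); normin H.

Lemma pb_ext {a b c p q : C} {f : hom a c} {g : hom b c} {pa : hom p a} {pb : hom p b}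
  (H : is_pullback f g pa pb) (x y : hom q p) :
  pa ∘ x = pa ∘ y -> pb ∘ x = pb ∘ y -> x = y.
Proof.
  intros E1 E2. destruct H as [Hc Hu].
  assert (Hq : f ∘ (pa ∘ x) = g ∘ (pb ∘ x)) by (rewrite !comp_assoc, Hc; reflexivity).
  destruct (Hu q _ _ Hq) as [h [_ Hh]].
  rewrite <- (Hh x (conj eq_refl eq_refl)). apply Hh. auto.
Qed.

Lemma pb_pair {a b c p q : C} {f : hom a c} {g : hom b c} {pa : hom p a} {pb : hom p b}
  (H : is_pullback f g pa pb) (qa : hom q a) (qb : hom q b) :
  f ∘ qa = g ∘ qb -> exists h, pa ∘ h = qa /\ pb ∘ h = qb.
Proof. intros E. destruct (proj2 H q qa qb E) as [h [Hh _]]. eauto. Qed.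

Lemma prod_ext {a b p q : C} {pa : hom p a} {pb : hom p b}
  (H : is_product pa pb) (x y : hom q p) :
  pa ∘ x = pa ∘ y -> pb ∘ x = pb ∘ y -> x = y.
Proof.
  intros E1 E2. destruct (H q (pa ∘ x) (pb ∘ x)) as [h [_ Hh]].
  rewrite <- (Hh x (conj eq_refl eq_refl)). apply Hh. auto.
Qed.

Lemma prod_pair {a b p q : C} {pa : hom p a} {pb : hom p b}
  (H : is_product pa pb) (qa : hom q a) (qb : hom q b) :
  exists h, pa ∘ h = qa /\ pb ∘ h = qb.
Proof. destruct (H q qa qb) as [h [Hh _]]. eauto. Qed.

Lemma prod_swap {a b p : C} {pa : hom p a} {pb : hom p b} :
  is_product pa pb -> is_product pb pa.
Proof.
  intros H q qb qa. destruct (H q qa qb) as [h [[H1 H2] Hu]].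
  exists h. split; [auto|]. intros h' [H1' H2']. apply Hu. auto.
Qed.

Lemma prod_ex (a b : C) : exists p (pa : hom p a) (pb : hom p b), is_product pa pb.
Proof.
  destruct (HPB a b Z0 (zfrom Z0 HZ a) (zfrom Z0 HZ b)) as [p [pa [pb H]]].
  exists p, pa, pb. intros q qa qb.
  destruct (proj2 H q qa qb (into_Z0 Z0 HZ _ _)) as [h [Hh Hu]].
  exists h. split; auto.
Qed.

Lemma kernel_zero {k a b : C} {kk : hom k a} {f : hom a b} :
  is_kernel kk f -> f ∘ kk = 0m.
Proof. intros [H _]. apply zeq; auto. Qed.

Lemma kernel_fac {k a b q : C} {kk : hom k a} {f : hom a b} (g : hom q a) :
  is_kernel kk f -> f ∘ g = 0m -> exists h, kk ∘ h = g.
Proof. intros [_ H] E. destruct (H q g) as [h [Hh _]].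
  rewrite E; apply zis. eauto. Qed.

Lemma kernel_mono {k a b : C} {kk : hom k a} {f : hom a b} :
  is_kernel kk f -> is_mono kk.
Proof.
  intros [H0 H] q x y E.
  assert (Z : is_zero_mor (f ∘ (kk ∘ x))).
  { apply zof. rewrite comp_assoc, (zeq _ H0). zs. reflexivity. }
  destruct (H q _ Z) as [h [_ Hu]].
  rewrite <- (Hu x eq_refl). apply Hu. auto.
Qed.

Lemma kernel_intro {k a b : C} (kk : hom k a) (f : hom a b) :
  f ∘ kk = 0m -> is_mono kk ->
  (forall q (g : hom q a), f ∘ g = 0m -> exists h, kk ∘ h = g) -> is_kernel kk f.
Proof.
  intros H0 Hm Hf. split. rewrite H0; apply zis.
  intros q g Hg. destruct (Hf q g (zeq _ Hg)) as [h Hh].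
  exists h. split; auto. intros h' E. apply Hm. congruence.
Qed.

Lemma ker_ex {a b : C} (f : hom a b) : exists k (kk : hom k a), is_kernel kk f.
Proof.
  destruct (HPB a Z0 b f (zto Z0 HZ b)) as [p [pa [pz H]]].
  exists p, pa. apply kernel_intro.
  - rewrite (proj1 H). unfold zm. rewrite (into_Z0 Z0 HZ pz (zfrom Z0 HZ p)). reflexivity.
  - intros q x y E. apply (pb_ext H); auto. apply (into_Z0 Z0 HZ).
  - intros q g E. destruct (pb_pair H g (zfrom Z0 HZ q)) as [h [Hh _]].
    rewrite E. reflexivity. eauto.
Qed.

Lemma split_mono {a b : C} (f : hom a b) (g : hom b a) : g ∘ f = idm a -> is_mono f.
Proof. intros E q x y H. rewrite <- (comp_idl x), <- (comp_idl y), <- E,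
  <- !comp_assoc, H. reflexivity. Qed.

Lemma eq_ex {a z : C} (f g : hom a z) : exists e (em : hom e a),
  f ∘ em = g ∘ em /\ is_mono em /\
  forall q (x : hom q a), f ∘ x = g ∘ x -> exists h, em ∘ h = x.
Proof.
  destruct (prod_ex a z) as [p [pa [pz Hp]]].
  destruct (prod_pair Hp (idm a) f) as [u [U1 U2]].
  destruct (prod_pair Hp (idm a) g) as [w [W1 W2]].
  destruct (HPB _ _ _ u w) as [e [e1 [e2 He]]].
  assert (E12 : e1 = e2).
  { pose proof (f_equal (fun t => pa ∘ t) (proj1 He)) as T. simpl in T.
    rewrite !comp_assoc, U1, W1, !comp_idl in T. exact T. }
  subst e2.
  exists e, e1. split; [|split].
  - pose proof (f_equal (fun t => pz ∘ t) (proj1 He)) as T. simpl in T.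
    rewrite !comp_assoc, U2, W2 in T. exact T.
  - intros q x y E. apply (pb_ext He); auto.
  - intros q x E. destruct (pb_pair He x x) as [h [Hh _]]; [|eauto].
    apply (prod_ext Hp); rewrite !comp_assoc; rewrite ?U1, ?W1, ?U2, ?W2; auto.
Qed.

Lemma SE {x a b m : C} (kap : hom x a) (al : hom a b) (be : hom b a)
  (mm : hom m a) (kap' : hom x m) (be' : hom b m) :
  is_split_ext kap al be -> is_mono mm -> mm ∘ kap' = kap -> mm ∘ be' = be ->
  is_iso mm.
Proof.
  intros [Hab Hk] Hm E1 E2.
  assert (Hs : is_split_ext kap' (al ∘ mm) be').
  { split.
    - rewrite <- comp_assoc, E2; auto.
    - apply kernel_intro.
      + rewrite <- comp_assoc, E1. apply (kernel_zero Hk).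
      + intros q u v E. apply (kernel_mono Hk). rewrite <- E1, <- !comp_assoc, E. reflexivity.
      + intros q g E. rewrite <- comp_assoc in E.
        destruct (kernel_fac _ Hk E) as [h Hh]. exists h. apply Hm.
        rewrite comp_assoc, E1. auto. }
  apply (HP _ _ _ _ _ _ kap' (al ∘ mm) be' kap al be (idm x) mm (idm b) Hs (conj Hab Hk)).
  - rewrite comp_idr; auto.
  - rewrite comp_idl; auto.
  - rewrite comp_idr; auto.
  - exists (idm x); split; apply comp_idl.
  - exists (idm b); split; apply comp_idl.
Qed.

Lemma iso_inv {a b : C} (f : hom a b) : is_iso f -> exists g, g ∘ f = idm a /\ f ∘ g = idm b.
Proof. auto. Qed.

Lemma jepi {x a b z : C} (kap : hom x a) (al : hom a b) (be : hom b a) (f g : hom a z) :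
  is_split_ext kap al be -> f ∘ kap = g ∘ kap -> f ∘ be = g ∘ be -> f = g.
Proof.
  intros Hs E1 E2.
  destruct (eq_ex f g) as [e [em [He [Hm Hu]]]].
  destruct (Hu _ kap E1) as [k' K]. destruct (Hu _ be E2) as [b' B].
  destruct (SE kap al be em k' b' Hs Hm K B) as [j [J1 J2]].
  rewrite <- (comp_idr f), <- (comp_idr g), <- J2, !comp_assoc, He. reflexivity.
Qed.

Lemma ZK {a b : C} (al : hom a b) (be : hom b a) :
  al ∘ be = idm b -> (forall q (g : hom q a), al ∘ g = 0m -> g = 0m) -> be ∘ al = idm a.
Proof.
  intros Hab Hk.
  assert (S1 : is_split_ext (zm Z0 HZ Z0 b) (idm b) (idm b)).
  { split. apply comp_idl. apply kernel_intro.
    - zs. reflexivity.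
    - intros q u v _. apply (into_Z0 Z0 HZ).
    - intros q g E. rewrite comp_idl in E. subst g. exists (zfrom Z0 HZ q).
      unfold zm. rewrite <- comp_assoc. f_equal. apply (into_Z0 Z0 HZ). }
  assert (S2 : is_split_ext (zm Z0 HZ Z0 a) al be).
  { split. auto. apply kernel_intro.
    - zs. reflexivity.
    - intros q u v _. apply (into_Z0 Z0 HZ).
    - intros q g E. apply Hk in E. subst g. exists (zfrom Z0 HZ q).
      unfold zm. rewrite <- comp_assoc. f_equal. apply (into_Z0 Z0 HZ). }
  destruct (HP _ _ _ _ _ _ _ _ _ _ _ _ (idm Z0) be (idm b) S1 S2) as [j [J1 J2]].
  - zs. reflexivity.
  - rewrite Hab, comp_idl. reflexivity.
  - reflexivity.
  - exists (idm Z0); split; apply comp_idl.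
  - exists (idm b); split; apply comp_idl.
  - assert (Ej : al = j) by (rewrite <- (comp_idr al), <- J2, comp_assoc, Hab, comp_idl; reflexivity).
    rewrite Ej. exact J2.
Qed.

Lemma KN {s y b : C} (m : hom s y) (al : hom y b) (be : hom b y) :
  al ∘ be = idm b -> is_kernel m al -> is_bourn_normal m.
Proof.
  intros Hab Hk. split; [exact (kernel_mono Hk)|].
  destruct (HPB _ _ _ al al) as [r [r1 [r2 Hr]]].
  exists r, r1, r2. split.
  - split; [|split; [|split]].
    + intros z f g E1 E2. apply (pb_ext Hr); auto.
    + destruct (pb_pair Hr (idm y) (idm y) eq_refl) as [d D]. exists d; exact D.
    + destruct (pb_pair Hr r2 r1 (eq_sym (proj1 Hr))) as [t T]. exists t; exact T.
    + intros p q1 q2 Hq.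
      apply (pb_pair Hr).
      transitivity (al ∘ (r2 ∘ q1)). rewrite !comp_assoc, (proj1 Hr); reflexivity.
      rewrite (proj1 Hq), !comp_assoc, (proj1 Hr). reflexivity.
  - destruct (prod_ex s s) as [p [pp1 [pp2 Hp]]].
    exists p, pp1, pp2. split; [exact Hp|].
    destruct (pb_pair Hr (m ∘ pp1) (m ∘ pp2)) as [mt [M1 M2]].
    { rewrite !comp_assoc, (kernel_zero Hk). zs. reflexivity. }
    exists mt. split; [auto|split; [auto|]].
    split; [auto|].
    intros q qa qb E.
    assert (E2 : al ∘ (r2 ∘ qa) = 0m).
    { rewrite comp_assoc, <- (proj1 Hr), <- comp_assoc, E, comp_assoc, (kernel_zero Hk). zs. reflexivity. }
    destruct (kernel_fac _ Hk E2) as [h2 H2].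
    destruct (prod_pair Hp qb h2) as [h [Hh1 Hh2]].
    exists h. split.
    + split; [|auto]. apply (pb_ext Hr).
      * rewrite comp_assoc, M1, <- comp_assoc, Hh1. auto.
      * rewrite comp_assoc, M2, <- comp_assoc, Hh2. auto.
    + intros h' [H1' H2']. apply (prod_ext Hp). congruence.
      apply (kernel_mono Hk). rewrite Hh2, H2.
      rewrite comp_assoc, <- M2, <- comp_assoc, H1'. reflexivity.
Qed.

Lemma PSE {a b p : C} {pa : hom p a} {pb : hom p b} (l : hom a p) (r : hom b p) :
  is_product pa pb -> pa ∘ l = idm a -> pa ∘ r = 0m -> pb ∘ r = idm b ->
  is_split_ext r pa l.
Proof.
  intros Hp L R1 R2. split; [auto|]. apply kernel_intro; auto.
  - exact (split_mono r pb R2).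
  - intros q g E. exists (pb ∘ g). apply (prod_ext Hp).
    + rewrite comp_assoc, R1, E. zs. reflexivity.
    + rewrite comp_assoc, R2, comp_idl. reflexivity.
Qed.

Lemma TRANS {y r : C} (r1 r2 : hom r y) (d : hom y r) :
  jointly_monic r1 r2 -> r1 ∘ d = idm y -> r2 ∘ d = idm y ->
  forall p (q1 q2 : hom p r), is_pullback r2 r1 q1 q2 ->
  exists t, r1 ∘ t = r1 ∘ q1 /\ r2 ∘ t = r2 ∘ q2.
Proof.
  intros Hjm D1 D2 p q1 q2 Hq.
  destruct (pb_pair Hq (d ∘ r1) (idm r)) as [sh [S1 S2]].
  { rewrite comp_assoc, D2, comp_idl, comp_idr. reflexivity. }
  destruct (ker_ex q2) as [K [kk Hk]].
  assert (Hs : is_split_ext kk q2 sh) by (split; auto).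
  destruct (prod_ex y y) as [yy [y1 [y2 Hp]]].
  destruct (prod_pair Hp (r1 ∘ q1) (r2 ∘ q2)) as [u [U1 U2]].
  destruct (prod_pair Hp r1 r2) as [w [W1 W2]].
  destruct (HPB _ _ _ u w) as [M [mm [mr Hm]]].
  assert (M1 : r1 ∘ (q1 ∘ mm) = r1 ∘ mr).
  { pose proof (f_equal (fun t => y1 ∘ t) (proj1 Hm)) as T. simpl in T.
    rewrite !comp_assoc, U1, W1 in T. rewrite comp_assoc. exact T. }
  assert (M2 : r2 ∘ (q2 ∘ mm) = r2 ∘ mr).
  { pose proof (f_equal (fun t => y2 ∘ t) (proj1 Hm)) as T. simpl in T.
    rewrite !comp_assoc, U2, W2 in T. rewrite comp_assoc. exact T. }
  assert (Hmono : is_mono mm).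
  { intros z x x' E. apply (pb_ext Hm); auto. apply Hjm.
    - rewrite !comp_assoc, <- M1, <- !comp_assoc, E. reflexivity.
    - rewrite !comp_assoc, <- M2, <- !comp_assoc, E. reflexivity. }
  destruct (pb_pair Hm kk (q1 ∘ kk)) as [k' K'].
  { apply (prod_ext Hp); rewrite !comp_assoc; rewrite ?U1, ?U2, ?W1, ?W2.
    - reflexivity.
    - rewrite <- !comp_assoc, (kernel_zero Hk). zs.
      rewrite (comp_assoc r2 q1 kk), (proj1 Hq), <- comp_assoc, (kernel_zero Hk). zs. reflexivity. }
  destruct (pb_pair Hm sh (idm r)) as [s' S'].
  { apply (prod_ext Hp); rewrite !comp_assoc; rewrite ?U1, ?U2, ?W1, ?W2; rewrite comp_idr.
    - rewrite <- comp_assoc, S1, comp_assoc, D1, comp_idl. reflexivity.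
    - rewrite <- comp_assoc, S2, comp_idr. reflexivity. }
  destruct (SE kk q2 sh mm k' s' Hs Hmono (proj1 K') (proj1 S')) as [j [J1 J2]].
  exists (mr ∘ j). split.
  - rewrite comp_assoc, <- M1, <- !comp_assoc, J2, comp_idr. reflexivity.
  - rewrite comp_assoc, <- M2, <- !comp_assoc, J2, comp_idr. reflexivity.
Qed.

Lemma SYM {y r : C} (r1 r2 : hom r y) (d : hom y r) :
  jointly_monic r1 r2 -> r1 ∘ d = idm y -> r2 ∘ d = idm y ->
  (forall q (g : hom q r), r1 ∘ g = 0m -> exists g', r1 ∘ g' = r2 ∘ g /\ r2 ∘ g' = 0m) ->
  exists s, r1 ∘ s = r2 /\ r2 ∘ s = r1.
Proof.
  intros Hjm D1 D2 Hker.
  destruct (ker_ex r1) as [K [kk Hk]].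
  assert (Hs : is_split_ext kk r1 d) by (split; auto).
  destruct (prod_ex y y) as [yy [y1 [y2 Hp]]].
  destruct (prod_pair Hp r2 r1) as [u [U1 U2]].
  destruct (prod_pair Hp r1 r2) as [w [W1 W2]].
  destruct (HPB _ _ _ u w) as [M [mm [mr Hm]]].
  assert (M1 : r2 ∘ mm = r1 ∘ mr).
  { pose proof (f_equal (fun t => y1 ∘ t) (proj1 Hm)) as T. simpl in T.
    rewrite !comp_assoc, U1, W1 in T. exact T. }
  assert (M2 : r1 ∘ mm = r2 ∘ mr).
  { pose proof (f_equal (fun t => y2 ∘ t) (proj1 Hm)) as T. simpl in T.
    rewrite !comp_assoc, U2, W2 in T. exact T. }
  assert (Hmono : is_mono mm).
  { intros z x x' E. apply (pb_ext Hm); auto. apply Hjm.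
    - rewrite !comp_assoc, <- M1, <- !comp_assoc, E. reflexivity.
    - rewrite !comp_assoc, <- M2, <- !comp_assoc, E. reflexivity. }
  destruct (Hker _ kk (kernel_zero Hk)) as [g' [G1 G2]].
  destruct (pb_pair Hm kk g') as [k' K'].
  { apply (prod_ext Hp); rewrite !comp_assoc; rewrite ?U1, ?U2, ?W1, ?W2; auto.
    rewrite G2, (kernel_zero Hk). reflexivity. }
  destruct (pb_pair Hm d d) as [s' S'].
  { apply (prod_ext Hp); rewrite !comp_assoc; rewrite ?U1, ?U2, ?W1, ?W2; congruence. }
  destruct (SE kk r1 d mm k' s' Hs Hmono (proj1 K') (proj1 S')) as [j [J1 J2]].
  exists (mr ∘ j). split.
  - rewrite comp_assoc, <- M1, <- comp_assoc, J2, comp_idr. reflexivity.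
  - rewrite comp_assoc, <- M2, <- comp_assoc, J2, comp_idr. reflexivity.
Qed.

Lemma LN {x a b a' b' z : C} (kap : hom x a) (al : hom a b) (be : hom b a)
  (kap' : hom x a') (al' : hom a' b') (be' : hom b' a')
  (f : hom b b') (a2 : hom a' z) (e2 : hom a z) :
  is_split_ext kap al be -> is_split_ext kap' al' be' ->
  a2 ∘ kap' = e2 ∘ kap -> is_mono (a2 ∘ kap') -> a2 ∘ (be' ∘ f) = e2 ∘ be ->
  exists v : hom a a', v ∘ kap = kap' /\ al' ∘ v = f ∘ al /\ v ∘ be = be' ∘ f.
Proof.
  intros [Hab Hk] [Hab' Hk'] E1 Hm E2.
  destruct (prod_ex b' z) as [bz [b1 [b2 Hp]]].
  destruct (prod_pair Hp al' a2) as [g1 [G11 G12]].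
  destruct (prod_pair Hp (f ∘ al) e2) as [g2 [G21 G22]].
  destruct (HPB _ _ _ g1 g2) as [P [pi' [pi HP']]].
  assert (P1 : al' ∘ pi' = f ∘ (al ∘ pi)).
  { pose proof (f_equal (fun t => b1 ∘ t) (proj1 HP')) as T. simpl in T.
    rewrite !comp_assoc, G11, G21 in T. rewrite comp_assoc. exact T. }
  assert (P2 : a2 ∘ pi' = e2 ∘ pi).
  { pose proof (f_equal (fun t => b2 ∘ t) (proj1 HP')) as T. simpl in T.
    rewrite !comp_assoc, G12, G22 in T. exact T. }
  destruct (pb_pair HP' kap' kap) as [kp [KP1 KP2]].
  { apply (prod_ext Hp); rewrite !comp_assoc; rewrite ?G11, ?G12, ?G21, ?G22; auto.
    rewrite (kernel_zero Hk'), <- comp_assoc, (kernel_zero Hk). zs. reflexivity. }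
  destruct (pb_pair HP' (be' ∘ f) be) as [bp [BP1 BP2]].
  { apply (prod_ext Hp); rewrite !comp_assoc; rewrite ?G11, ?G12, ?G21, ?G22.
    - rewrite Hab', comp_idl, <- comp_assoc, Hab, comp_idr. reflexivity.
    - rewrite <- comp_assoc. exact E2. }
  assert (Hs : is_split_ext kp (al ∘ pi) bp).
  { split.
    - rewrite <- comp_assoc, BP2. exact Hab.
    - apply kernel_intro.
      + rewrite <- comp_assoc, KP2. apply (kernel_zero Hk).
      + intros q u v E. apply (kernel_mono Hk). rewrite <- KP2, <- !comp_assoc, E. reflexivity.
      + intros q g E. rewrite <- comp_assoc in E.
        destruct (kernel_fac _ Hk E) as [h H].
        assert (E' : al' ∘ (pi' ∘ g) = 0m).
        { rewrite comp_assoc, P1, <- !comp_assoc, E. zs. reflexivity. }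
        destruct (kernel_fac _ Hk' E') as [h' H'].
        assert (Ehh : h' = h).
        { apply Hm. rewrite <- !comp_assoc, H', comp_assoc, P2, <- comp_assoc, <- H,
            comp_assoc, <- E1, <- comp_assoc. reflexivity. }
        subst h'. exists h. apply (pb_ext HP').
        * rewrite comp_assoc, KP1. auto.
        * rewrite comp_assoc, KP2. auto. }
  destruct (HP _ _ _ _ _ _ kp (al ∘ pi) bp kap al be (idm x) pi (idm b) Hs (conj Hab Hk))
    as [j [J1 J2]].
  - rewrite comp_idr. exact KP2.
  - rewrite comp_idl. reflexivity.
  - rewrite comp_idr. exact BP2.
  - exists (idm x); split; apply comp_idl.
  - exists (idm b); split; apply comp_idl.
  - assert (Jk : j ∘ kap = kp) by (rewrite <- KP2, comp_assoc, J1, comp_idl; reflexivity).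
    assert (Jb : j ∘ be = bp) by (rewrite <- BP2, comp_assoc, J1, comp_idl; reflexivity).
    exists (pi' ∘ j). split; [|split].
    + rewrite <- comp_assoc, Jk. exact KP1.
    + rewrite comp_assoc, P1, <- !comp_assoc, J2, comp_idr. reflexivity.
    + rewrite <- comp_assoc, Jb. exact BP1.
Qed.



Section Main.
Context (X GX SX : C) (k : hom X SX) (p1 : hom SX GX) (i : hom GX SX)
  (Hgen : is_generic_split_ext k p1 i) (c : hom X GX)
  (XX : C) (q1 q2 : hom XX X) (Hq : is_product q1 q2) (d01 dd : hom X XX) (vc : hom XX SX)
  (Hd01a : is_zero_mor (q1 ∘ d01)) (Hd01b : q2 ∘ d01 = idm X)
  (Hdd1 : q1 ∘ dd = idm X) (Hdd2 : q2 ∘ dd = idm X)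
  (Hv1 : vc ∘ d01 = k) (Hv2 : p1 ∘ vc = c ∘ q1) (Hv3 : vc ∘ dd = i ∘ c).

Lemma Hsg : is_split_ext k p1 i.
Proof. exact (proj1 Hgen). Qed.
Lemma p1k : p1 ∘ k = 0m.
Proof. exact (kernel_zero (proj2 Hsg)). Qed.
Lemma p1i : p1 ∘ i = idm GX.
Proof. exact (proj1 Hsg). Qed.
Lemma kmono : is_mono k.
Proof. exact (kernel_mono (proj2 Hsg)). Qed.
Lemma q1d01 : q1 ∘ d01 = 0m.
Proof. exact (zeq _ Hd01a). Qed.
Lemma E2 : is_split_ext d01 q1 dd.
Proof. exact (PSE dd d01 Hq Hdd1 q1d01 Hd01b). Qed.

Lemma gu {a b : C} (kap : hom X a) (al : hom a b) (be : hom b a)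
  (v v' : hom a SX) (w w' : hom b GX) :
  is_split_ext kap al be ->
  v ∘ kap = k -> p1 ∘ v = w ∘ al -> v ∘ be = i ∘ w ->
  v' ∘ kap = k -> p1 ∘ v' = w' ∘ al -> v' ∘ be = i ∘ w' -> w = w'.
Proof.
  intros Hs A1 A2 A3 B1 B2 B3.
  destruct (proj2 Hgen _ _ kap al be Hs) as [vw [_ U]].
  pose proof (U (v, w) (conj A1 (conj A2 A3))) as T1.
  pose proof (U (v', w') (conj B1 (conj B2 B3))) as T2.
  rewrite T1 in T2. inversion T2. reflexivity.
Qed.

Lemma mu_ex : exists mu : hom SX GX, mu ∘ k = c /\ mu ∘ i = idm GX.
Proof.
  destruct (HPB _ _ _ p1 p1) as [RP [e1 [e2 Hr]]].
  destruct (pb_pair Hr (zm Z0 HZ X SX) k) as [kr [KR1 KR2]].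
  { rewrite p1k. zs. reflexivity. }
  destruct (pb_pair Hr (idm SX) (idm SX) eq_refl) as [dl [DL1 DL2]].
  assert (Hs : is_split_ext kr e1 dl).
  { split; auto. apply kernel_intro.
    - exact KR1.
    - intros q u v E. apply kmono. rewrite <- KR2, <- !comp_assoc, E. reflexivity.
    - intros q g E.
      assert (E' : p1 ∘ (e2 ∘ g) = 0m).
      { rewrite comp_assoc, <- (proj1 Hr), <- comp_assoc, E. zs. reflexivity. }
      destruct (kernel_fac _ (proj2 Hsg) E') as [h H].
      exists h. apply (pb_ext Hr).
      + rewrite comp_assoc, KR1, E. zs. reflexivity.
      + rewrite comp_assoc, KR2. exact H. }
  destruct (proj2 Hgen _ _ kr e1 dl Hs) as [[vm mu] [[M1 [M2 M3]] _]].
  simpl in M1, M2, M3.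
  exists mu. split.
  - destruct (pb_pair Hr (k ∘ q1) (k ∘ q2)) as [u [U1 U2]].
    { rewrite !comp_assoc, p1k. zs. reflexivity. }
    assert (Ud : u ∘ d01 = kr).
    { apply (pb_ext Hr).
      + rewrite comp_assoc, U1, KR1, <- comp_assoc, q1d01. zs. reflexivity.
      + rewrite comp_assoc, U2, KR2, <- comp_assoc, Hd01b, comp_idr. reflexivity. }
    assert (Udd : u ∘ dd = dl ∘ k).
    { apply (pb_ext Hr).
      + rewrite !comp_assoc, U1, DL1, <- comp_assoc, Hdd1, comp_idr, comp_idl. reflexivity.
      + rewrite !comp_assoc, U2, DL2, <- comp_assoc, Hdd2, comp_idr, comp_idl. reflexivity. }
    symmetry. apply (gu d01 q1 dd vc (vm ∘ u) c (mu ∘ k) E2 Hv1 Hv2 Hv3).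
    + rewrite <- comp_assoc, Ud. exact M1.
    + rewrite comp_assoc, M2, <- comp_assoc, U1, comp_assoc. reflexivity.
    + rewrite <- comp_assoc, Udd, comp_assoc, M3, <- comp_assoc. reflexivity.
  - destruct (pb_pair Hr (i ∘ p1) (idm SX)) as [u [U1 U2]].
    { rewrite comp_assoc, p1i, comp_idl, comp_idr. reflexivity. }
    assert (Uk : u ∘ k = kr).
    { apply (pb_ext Hr).
      + rewrite comp_assoc, U1, KR1, <- comp_assoc, p1k. zs. reflexivity.
      + rewrite comp_assoc, U2, KR2, comp_idl. reflexivity. }
    assert (Ui : u ∘ i = dl ∘ i).
    { apply (pb_ext Hr).
      + rewrite !comp_assoc, U1, DL1, <- comp_assoc, p1i, comp_idr, comp_idl. reflexivity.
      + rewrite !comp_assoc, U2, DL2. reflexivity. }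
    symmetry. apply (gu k p1 i (idm SX) (vm ∘ u) (idm GX) (mu ∘ i) Hsg).
    + apply comp_idl.
    + rewrite comp_idr, comp_idl. reflexivity.
    + rewrite comp_idr, comp_idl. reflexivity.
    + rewrite <- comp_assoc, Uk. exact M1.
    + rewrite comp_assoc, M2, <- comp_assoc, U1, comp_assoc. reflexivity.
    + rewrite <- comp_assoc, Ui, comp_assoc, M3, <- comp_assoc. reflexivity.
Qed.

Context (mu : hom SX GX) (Hmk : mu ∘ k = c) (Hmi : mu ∘ i = idm GX).

Lemma A1 {b : C} (h : hom b X) : commutes h (idm X) -> c ∘ h = 0m.
Proof.
  intros [P [pb [py [Hp [phi [l [r [L1 [L2 [R1 [R2 [F1 F2]]]]]]]]]]]].
  apply zeq in L2. apply zeq in R1.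
  pose proof (PSE l r Hp L1 R1 R2) as E1.
  destruct (prod_pair Hq (h ∘ pb) phi) as [V [V1 V2]].
  assert (Vr : V ∘ r = d01).
  { apply (prod_ext Hq).
    - rewrite comp_assoc, V1, <- comp_assoc, R1, q1d01. zs. reflexivity.
    - rewrite comp_assoc, V2, F2, Hd01b. reflexivity. }
  assert (Vl : V ∘ l = dd ∘ h).
  { apply (prod_ext Hq).
    - rewrite comp_assoc, V1, <- comp_assoc, L1, comp_idr, comp_assoc, Hdd1, comp_idl. reflexivity.
    - rewrite comp_assoc, V2, F1, comp_assoc, Hdd2, comp_idl. reflexivity. }
  apply (gu r pb l (vc ∘ V) (k ∘ py) (c ∘ h) 0m E1).
  - rewrite <- comp_assoc, Vr. exact Hv1.
  - rewrite comp_assoc, Hv2, <- comp_assoc, V1, comp_assoc. reflexivity.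
  - rewrite <- comp_assoc, Vl, comp_assoc, Hv3, <- comp_assoc. reflexivity.
  - rewrite <- comp_assoc, R2, comp_idr. reflexivity.
  - rewrite comp_assoc, p1k. zs. reflexivity.
  - rewrite <- comp_assoc, L2. zs. reflexivity.
Qed.

Lemma id_normal (y : C) : is_bourn_normal (idm y).
Proof.
  apply (KN (idm y) (zm Z0 HZ y Z0) (zm Z0 HZ Z0 y)).
  - apply (into_Z0 Z0 HZ).
  - apply kernel_intro.
    + apply comp_idr.
    + intros q u v E. rewrite !comp_idl in E. exact E.
    + intros q g _. exists g. apply comp_idl.
Qed.

Lemma A2 : is_characteristic_mono c -> is_mono c.
Proof.
  intros H. destruct (H _ _ (id_normal GX)) as [Hm _].
  rewrite comp_idl in Hm. exact Hm.
Qed.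

Lemma A3 : is_mono c -> trivial_center X.
Proof.
  intros Hm. exists Z0, (zm Z0 HZ Z0 X). split; [exact HZ|]. split.
  - exists X, (zm Z0 HZ X Z0), (idm X). split.
    + intros q qa qb. exists qb. split.
      * split; [apply (into_Z0 Z0 HZ)|apply comp_idl].
      * intros h' [_ H]. rewrite comp_idl in H. auto.
    + exists (idm X), (zm Z0 HZ Z0 X), (idm X).
      split; [apply (into_Z0 Z0 HZ)|]. split; [apply zof; rewrite comp_idl; reflexivity|].
      split; [apply zof; rewrite comp_idr; reflexivity|]. split; [apply comp_idl|].
      split; apply comp_idl.
  - intros b h Hh. pose proof (A1 h Hh) as E.
    assert (Eh : h = 0m) by (apply Hm; rewrite E; zs; reflexivity).
    exists (zfrom Z0 HZ b). split.
    + rewrite Eh. zs. reflexivity.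
    + intros t _. apply (into_Z0 Z0 HZ).
Qed.

Lemma LM {a b : C} (kap : hom X a) (al : hom a b) (be : hom b a) (V2 : hom a GX) (W : hom b GX) :
  is_mono c -> is_split_ext kap al be -> V2 ∘ kap = c -> V2 ∘ be = W ->
  exists v, v ∘ kap = k /\ p1 ∘ v = W ∘ al /\ v ∘ be = i ∘ W.
Proof.
  intros Hm Hs E1 E2.
  apply (LN kap al be k p1 i W mu V2 Hs Hsg).
  - rewrite Hmk. auto.
  - rewrite Hmk. exact Hm.
  - rewrite comp_assoc, Hmi, comp_idl. auto.
Qed.

Lemma B_part : is_characteristic_mono c -> strong_complete GX.
Proof.
  intros Hch. pose proof (A2 Hch) as Hm.
  intros Y m [B [al [be [Hab Hk]]]].
  pose proof (KN m al be Hab Hk) as Hn.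
  destruct (Hch _ _ Hn) as [Hmc [S [s1 [s2 [[Hjm [[dS [D1 D2]] _]]
    [P [pp1 [pp2 [Hp [mt [T1 [T2 Hpb]]]]]]]]]]]].
  destruct (prod_pair Hp (zm Z0 HZ X X) (idm X)) as [j [J1 J2]].
  assert (mtm : is_mono mt).
  { intros q x y E. apply (pb_ext Hpb); auto. apply Hmc.
    rewrite !comp_assoc, <- T1, <- !comp_assoc, E. reflexivity. }
  assert (HsS : is_split_ext (mt ∘ j) s1 dS).
  { split; auto. apply kernel_intro.
    - rewrite comp_assoc, T1, <- !comp_assoc, J1. zs. reflexivity.
    - intros q u v E. apply (split_mono j pp2 J2). apply mtm.
      rewrite !comp_assoc. exact E.
    - intros q g E. destruct (pb_pair Hpb g (zm Z0 HZ q X)) as [h [H1 H2]].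
      { rewrite E. zs. reflexivity. }
      exists (pp2 ∘ h).
      assert (Eh : j ∘ (pp2 ∘ h) = h).
      { apply (prod_ext Hp).
        - rewrite comp_assoc, J1, H2. zs. reflexivity.
        - rewrite comp_assoc, J2, comp_idl. reflexivity. }
      rewrite <- comp_assoc, Eh. exact H1. }
  assert (S2k : s2 ∘ (mt ∘ j) = m ∘ c).
  { rewrite comp_assoc, T2, <- comp_assoc, J2, comp_idr. reflexivity. }
  destruct (proj2 Hgen _ _ (mt ∘ j) s1 dS HsS) as [[vS w] [[W1 [W2 W3]] _]].
  simpl in W1, W2, W3.
  exists w. split.
  - destruct (LN k p1 i (mt ∘ j) s1 dS m s2 (m ∘ mu) Hsg HsS) as [v' [V1 [V2 V3]]].
    + rewrite S2k, <- comp_assoc, Hmk. reflexivity.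
    + rewrite S2k. exact Hmc.
    + rewrite comp_assoc, D2, comp_idl, <- comp_assoc, Hmi, comp_idr. reflexivity.
    + apply (gu k p1 i (vS ∘ v') (idm SX) (w ∘ m) (idm GX) Hsg).
      * rewrite <- comp_assoc, V1. exact W1.
      * rewrite comp_assoc, W2, <- comp_assoc, V2, comp_assoc. reflexivity.
      * rewrite <- comp_assoc, V3, comp_assoc, W3, <- comp_assoc. reflexivity.
      * apply comp_idl.
      * rewrite comp_idr, comp_idl. reflexivity.
      * rewrite comp_idr, comp_idl. reflexivity.
  - intros r Hr.
    destruct (LM (mt ∘ j) s1 dS (r ∘ s2) r Hm HsS) as [v [V1 [V2 V3]]].
    + rewrite <- comp_assoc, S2k, comp_assoc, Hr, comp_idl. reflexivity.
    + rewrite <- comp_assoc, D2, comp_idr. reflexivity.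
    + apply (gu (mt ∘ j) s1 dS vS v w r HsS W1 W2 W3 V1 V2 V3).
Qed.

Lemma C0 : trivial_center X -> is_mono c.
Proof.
  intros [z [gz [Hz [_ Hcen]]]].
  assert (St : forall b (y : hom b X), c ∘ y = 0m -> y = 0m).
  { intros b y Ey.
    destruct (prod_ex b X) as [P [pb [py Hp]]].
    destruct (prod_pair Hp (idm b) (zm Z0 HZ b X)) as [l [L1 L2]].
    destruct (prod_pair Hp (zm Z0 HZ X b) (idm X)) as [r [R1 R2]].
    pose proof (PSE l r Hp L1 R1 R2) as Es.
    destruct (LN r pb l d01 q1 dd y vc (k ∘ py) Es E2) as [V [V1 [V2 V3]]].
    - rewrite Hv1, <- comp_assoc, R2, comp_idr. reflexivity.
    - rewrite Hv1. exact kmono.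
    - rewrite (comp_assoc vc dd y), Hv3, <- comp_assoc, Ey, <- comp_assoc, L2. zs. reflexivity.
    - assert (Hcomm : commutes y (idm X)).
      { exists P, pb, py. split; [exact Hp|]. exists (q2 ∘ V), l, r.
        split; [exact L1|]. split; [apply zof; exact L2|]. split; [apply zof; exact R1|].
        split; [exact R2|]. split.
        - rewrite <- comp_assoc, V3, comp_assoc, Hdd2, comp_idl. reflexivity.
        - rewrite <- comp_assoc, V1, Hd01b. reflexivity. }
      destruct (Hcen _ _ Hcomm) as [t [Ht _]].
      apply zeq. exists z. split; [exact Hz|]. exists t, gz. auto. }
  destruct (HPB _ _ _ c c) as [RC [e1 [e2 Hr]]].
  destruct (pb_pair Hr (idm X) (idm X) eq_refl) as [dl [DL1 DL2]].
  assert (Hz' : dl ∘ e1 = idm RC).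
  { apply (ZK e1 dl DL1). intros q g E.
    assert (E2' : e2 ∘ g = 0m).
    { apply St. rewrite comp_assoc, <- (proj1 Hr), <- comp_assoc, E. zs. reflexivity. }
    apply (pb_ext Hr); zs; auto. }
  intros q x y E. destruct (pb_pair Hr x y E) as [h [H1 H2]].
  rewrite <- H1, <- H2. rewrite <- (comp_idl h), <- Hz'.
  rewrite !comp_assoc, DL1, DL2. reflexivity.
Qed.

Lemma C1 : strong_complete GX ->
  exists (B A : C) (k' : hom GX A) (p' : hom A B) (i' : hom B A), is_generic_split_ext k' p' i'.
Proof.
  intros Hsc.
  destruct (prod_ex GX GX) as [G2 [g1 [g2 Hp]]].
  destruct (prod_pair Hp (idm GX) (zm Z0 HZ GX GX)) as [j10 [J1 J2]].
  destruct (prod_pair Hp (idm GX) (idm GX)) as [dg [DG1 DG2]].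
  exists GX, G2, j10, g2, dg. split.
  - exact (PSE dg j10 (prod_swap Hp) DG2 J2 J1).
  - intros a b kap al be Hs.
    destruct (Hsc a kap (ex_intro _ b (ex_intro _ al (ex_intro _ be Hs)))) as [rho [Hrho Urho]].
    destruct (prod_pair Hp rho (rho ∘ (be ∘ al))) as [v [V1 V2]].
    exists (v, rho ∘ be). split.
    + simpl. split; [|split].
      * apply (prod_ext Hp).
        -- rewrite comp_assoc, V1, J1. exact Hrho.
        -- rewrite comp_assoc, V2, J2, <- !comp_assoc, (kernel_zero (proj2 Hs)). zs. reflexivity.
      * rewrite V2, comp_assoc. reflexivity.
      * apply (prod_ext Hp).
        -- rewrite comp_assoc, V1, (comp_assoc g1 dg), DG1, comp_idl. reflexivity.
        -- rewrite comp_assoc, V2, (comp_assoc g2 dg), DG2, comp_idl, <- !comp_assoc, (proj1 Hs), comp_idr.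
           reflexivity.
    + intros [v' w'] [A1 [A2 A3]]. simpl in A1, A2, A3.
      assert (Er : rho = g1 ∘ v').
      { apply Urho. rewrite <- comp_assoc, A1. exact J1. }
      assert (Ew : rho ∘ be = w').
      { rewrite Er, <- comp_assoc, A3, comp_assoc, DG1, comp_idl. reflexivity. }
      assert (Ev : v = v').
      { apply (prod_ext Hp).
        - rewrite V1. exact Er.
        - rewrite V2, A2, <- Ew, comp_assoc. reflexivity. }
      rewrite Ev, Ew. reflexivity.
Qed.

Lemma mu_vc : mu ∘ vc = c ∘ q2.
Proof.
  apply (jepi d01 q1 dd _ _ E2).
  - rewrite <- comp_assoc, Hv1, Hmk, <- comp_assoc, Hd01b, comp_idr. reflexivity.
  - rewrite <- comp_assoc, Hv3, comp_assoc, Hmi, comp_idl, <- comp_assoc, Hdd2, comp_idr.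
    reflexivity.
Qed.

Lemma Sx_pb : is_pullback p1 c vc q1.
Proof.
  destruct (HPB _ _ _ p1 c) as [PB [pS [pX Hpb]]].
  destruct (pb_pair Hpb k (zm Z0 HZ X X)) as [kb [KB1 KB2]].
  { rewrite p1k. zs. reflexivity. }
  destruct (pb_pair Hpb (i ∘ c) (idm X)) as [bb [BB1 BB2]].
  { rewrite comp_assoc, p1i, comp_idl, comp_idr. reflexivity. }
  assert (Hs : is_split_ext kb pX bb).
  { split; auto. apply kernel_intro; auto.
    - intros q u v E. apply kmono. rewrite <- KB1, <- !comp_assoc, E. reflexivity.
    - intros q g E.
      assert (E' : p1 ∘ (pS ∘ g) = 0m).
      { rewrite comp_assoc, (proj1 Hpb), <- comp_assoc, E. zs. reflexivity. }
      destruct (kernel_fac _ (proj2 Hsg) E') as [h H].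
      exists h. apply (pb_ext Hpb).
      + rewrite comp_assoc, KB1. exact H.
      + rewrite comp_assoc, KB2, E. zs. reflexivity. }
  destruct (pb_pair Hpb vc q1 Hv2) as [u [U1 U2]].
  destruct (HP _ _ _ _ _ _ d01 q1 dd kb pX bb (idm X) u (idm X) E2 Hs) as [j [Ja Jb]].
  - rewrite comp_idr. apply (pb_ext Hpb).
    + rewrite comp_assoc, U1, KB1. exact Hv1.
    + rewrite comp_assoc, U2, KB2. exact q1d01.
  - rewrite comp_idl. exact U2.
  - rewrite comp_idr. apply (pb_ext Hpb).
    + rewrite comp_assoc, U1, BB1. exact Hv3.
    + rewrite comp_assoc, U2, BB2. exact Hdd1.
  - exists (idm X); split; apply comp_idl.
  - exists (idm X); split; apply comp_idl.
  - split; [exact Hv2|]. intros q qa qb E.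
    destruct (pb_pair Hpb qa qb E) as [t [T1 T2]].
    exists (j ∘ t). split.
    + split.
      * rewrite <- U1, <- comp_assoc, (comp_assoc u j t), Jb, comp_idl. exact T1.
      * rewrite <- U2, <- comp_assoc, (comp_assoc u j t), Jb, comp_idl. exact T2.
    + intros h' [H1 H2].
      assert (Eu : u ∘ h' = t).
      { apply (pb_ext Hpb); rewrite comp_assoc; [rewrite U1|rewrite U2]; congruence. }
      rewrite <- Eu, comp_assoc, Ja, comp_idl. reflexivity.
Qed.

Lemma Sx_jm : is_mono c -> jointly_monic p1 mu.
Proof.
  intros Hm z f g E1 E2.
  destruct (HPB _ _ _ p1 p1) as [RP [e1 [e2 Hr]]].
  destruct (eq_ex (mu ∘ e1) (mu ∘ e2)) as [M [em [He [Hem Hu]]]].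
  destruct (pb_pair Hr (idm SX) (idm SX) eq_refl) as [dl [DL1 DL2]].
  destruct (Hu _ dl) as [dm Dm].
  { rewrite <- !comp_assoc, DL1, DL2. reflexivity. }
  assert (Hz : dm ∘ (e1 ∘ em) = idm M).
  { apply (ZK (e1 ∘ em) dm).
    - rewrite <- comp_assoc, Dm. exact DL1.
    - intros q g0 E.
      assert (E' : p1 ∘ (e2 ∘ (em ∘ g0)) = 0m).
      { rewrite comp_assoc, <- (proj1 Hr), <- comp_assoc, (comp_assoc e1 em g0), E. zs.
        reflexivity. }
      destruct (kernel_fac _ (proj2 Hsg) E') as [x Hx].
      assert (Ecx : c ∘ x = 0m).
      { rewrite <- Hmk, <- comp_assoc, Hx.
        transitivity (((mu ∘ e2) ∘ em) ∘ g0). { rewrite <- !comp_assoc. reflexivity. }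
        rewrite <- He. rewrite <- !comp_assoc. rewrite (comp_assoc e1 em g0), E. zs. reflexivity. }
      assert (Ex : x = 0m) by (apply Hm; rewrite Ecx; zs; reflexivity).
      subst x. zsin Hx.
      apply Hem. zs. apply (pb_ext Hr).
      + rewrite comp_assoc, E. zs. reflexivity.
      + rewrite <- Hx. zs. reflexivity. }
  destruct (pb_pair Hr f g E1) as [t [T1 T2]].
  destruct (Hu _ t) as [y Hy].
  { rewrite <- !comp_assoc, T1, T2. exact E2. }
  rewrite <- T1, <- T2, <- Hy.
  rewrite <- (comp_idl y), <- Hz.
  rewrite !comp_assoc. rewrite <- (comp_assoc e2 em dm), Dm, DL2.
  rewrite <- (comp_assoc e1 em dm), Dm, DL1. reflexivity.
Qed.

Lemma C2 : is_mono c -> strong_complete GX -> is_characteristic_mono c.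
Proof.
  intros Hm Hsc Y n [Hnm [R [r1 [r2 [[Rjm [[d [D1 D2]] [[sR [SR1 SR2]] Rtr]]]
    [Pn [pn1 [pn2 [Hpn [mt [T1 [T2 Hpb]]]]]]]]]]]].
  destruct (prod_pair Hpn (zm Z0 HZ GX GX) (idm GX)) as [j01 [J1 J2]].
  destruct (prod_pair Hpn (idm GX) (zm Z0 HZ GX GX)) as [j10 [J1' J2']].
  destruct (prod_pair Hpn (idm GX) (idm GX)) as [jd [JD1 JD2]].
  assert (mtm : is_mono mt).
  { intros q x y E. apply (pb_ext Hpb); auto. apply Hnm.
    rewrite !comp_assoc, <- T1, <- !comp_assoc, E. reflexivity. }
  assert (Hker : is_kernel (mt ∘ j01) r1).
  { apply kernel_intro.
    - rewrite comp_assoc, T1, <- !comp_assoc, J1. zs. reflexivity.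
    - intros q u v E. apply (split_mono j01 pn2 J2). apply mtm.
      rewrite !comp_assoc. exact E.
    - intros q g E. destruct (pb_pair Hpb g (zm Z0 HZ q GX)) as [h [H1 H2]].
      { rewrite E. zs. reflexivity. }
      exists (pn2 ∘ h).
      assert (Eh : j01 ∘ (pn2 ∘ h) = h).
      { apply (prod_ext Hpn).
        - rewrite comp_assoc, J1, H2. zs. reflexivity.
        - rewrite comp_assoc, J2, comp_idl. reflexivity. }
      rewrite <- comp_assoc, Eh. exact H1. }
  destruct (Hsc R (mt ∘ j01) (ex_intro _ Y (ex_intro _ r1 (ex_intro _ d (conj D1 Hker)))))
    as [rho [Hrho _]].
  assert (Rmt : rho ∘ mt = pn2).
  { pose proof (PSE j10 j01 Hpn J1' J1 J2) as Hs0.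
    destruct (Hsc Pn j01 (ex_intro _ GX (ex_intro _ pn1 (ex_intro _ j10 Hs0))))
      as [r0 [_ U0]].
    rewrite <- (U0 (rho ∘ mt)), <- (U0 pn2); auto.
    rewrite <- comp_assoc. exact Hrho. }
  set (r := rho ∘ d).
  assert (Dn : d ∘ n = mt ∘ jd).
  { apply Rjm.
    - rewrite comp_assoc, D1, comp_idl, comp_assoc, T1, <- comp_assoc, JD1, comp_idr. reflexivity.
    - rewrite comp_assoc, D2, comp_idl, comp_assoc, T2, <- comp_assoc, JD2, comp_idr. reflexivity. }
  assert (RN : r ∘ n = idm GX).
  { unfold r. rewrite <- comp_assoc, Dn, comp_assoc, Rmt. exact JD2. }
  assert (RT1 : r ∘ (r1 ∘ mt) = pn1) by (rewrite T1, comp_assoc, RN, comp_idl; reflexivity).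
  assert (RT2 : r ∘ (r2 ∘ mt) = pn2) by (rewrite T2, comp_assoc, RN, comp_idl; reflexivity).
  destruct (prod_ex GX GX) as [G2 [g1 [g2 Hp2]]].
  destruct (prod_pair Hp2 (r ∘ r1) (r ∘ r2)) as [a [A1 A2]].
  destruct (prod_pair Hp2 p1 mu) as [b [B1 B2]].
  destruct (HPB _ _ _ a b) as [S [sgR [sgX HS]]].
  assert (S1 : r ∘ (r1 ∘ sgR) = p1 ∘ sgX).
  { pose proof (f_equal (fun t => g1 ∘ t) (proj1 HS)) as T. simpl in T.
    rewrite !comp_assoc, A1, B1 in T. rewrite comp_assoc. exact T. }
  assert (S2 : r ∘ (r2 ∘ sgR) = mu ∘ sgX).
  { pose proof (f_equal (fun t => g2 ∘ t) (proj1 HS)) as T. simpl in T.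
    rewrite !comp_assoc, A2, B2 in T. rewrite comp_assoc. exact T. }
  assert (Hpair : forall q (x : hom q R) (y : hom q SX),
            r ∘ (r1 ∘ x) = p1 ∘ y -> r ∘ (r2 ∘ x) = mu ∘ y ->
            exists h, sgR ∘ h = x /\ sgX ∘ h = y).
  { intros q x y E1 E2'. apply (pb_pair HS). apply (prod_ext Hp2).
    - rewrite !comp_assoc, A1, B1, <- !comp_assoc. exact E1.
    - rewrite !comp_assoc, A2, B2, <- !comp_assoc. exact E2'. }
  set (s1 := r1 ∘ sgR). set (s2 := r2 ∘ sgR).
  assert (Sjm : jointly_monic s1 s2).
  { intros z f g E1 E2'. unfold s1, s2 in *. rewrite <- !comp_assoc in E1, E2'.
    assert (ER : sgR ∘ f = sgR ∘ g) by (apply Rjm; auto).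
    apply (pb_ext HS); auto. apply (Sx_jm Hm).
    - rewrite (comp_assoc p1 sgX f), (comp_assoc p1 sgX g), <- S1, <- !comp_assoc, ER. reflexivity.
    - rewrite (comp_assoc mu sgX f), (comp_assoc mu sgX g), <- S2, <- !comp_assoc, ER. reflexivity. }
  destruct (Hpair _ d (i ∘ r)) as [dS [DS1 DS2]].
  { rewrite D1, comp_idr, comp_assoc, p1i, comp_idl. reflexivity. }
  { rewrite D2, comp_idr, comp_assoc, Hmi, comp_idl. reflexivity. }
  assert (SD1 : s1 ∘ dS = idm Y) by (unfold s1; rewrite <- comp_assoc, DS1; exact D1).
  assert (SD2 : s2 ∘ dS = idm Y) by (unfold s2; rewrite <- comp_assoc, DS1; exact D2).
  destruct (prod_pair Hq (idm X) (zm Z0 HZ X X)) as [jx [JX1 JX2]].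
  split.
  { intros q x y E. apply Hm, Hnm. rewrite !comp_assoc. exact E. }
  exists S, s1, s2. split.
  - split; [exact Sjm|]. split; [exists dS; auto|]. split.
    + apply (SYM s1 s2 dS Sjm SD1 SD2).
      intros q g E. unfold s1 in E. rewrite <- comp_assoc in E.
      assert (E' : p1 ∘ (sgX ∘ g) = 0m).
      { rewrite comp_assoc, <- S1, <- !comp_assoc, E. zs. reflexivity. }
      destruct (kernel_fac _ (proj2 Hsg) E') as [x Hx].
      destruct (Hpair _ (sR ∘ (sgR ∘ g)) (vc ∘ (jx ∘ x))) as [g' [GG1 GG2]].
      { transitivity (mu ∘ (sgX ∘ g)).
        - rewrite (comp_assoc r1 sR), SR1, (comp_assoc r2 sgR g), (comp_assoc r (r2 ∘ sgR) g), S2,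
            <- comp_assoc. reflexivity.
        - rewrite (comp_assoc p1 vc), Hv2, <- comp_assoc, (comp_assoc q1 jx), JX1, comp_idl, <- Hx,
            comp_assoc, Hmk. reflexivity. }
      { rewrite (comp_assoc r2 sR), SR2, E, (comp_assoc mu vc), mu_vc, <- comp_assoc,
          (comp_assoc q2 jx), JX2. zs. reflexivity. }
      exists g'. unfold s1, s2. split.
      * rewrite <- comp_assoc, GG1, (comp_assoc r1 sR), SR1, comp_assoc. reflexivity.
      * rewrite <- comp_assoc, GG1, (comp_assoc r2 sR), SR2, E. reflexivity.
    + apply (TRANS s1 s2 dS Sjm SD1 SD2).
  - exists XX, q1, q2. split; [exact Hq|].
    destruct (prod_pair Hpn (c ∘ q1) (c ∘ q2)) as [cc [CC1 CC2]].
    destruct (Hpair _ (mt ∘ cc) vc) as [mtS [M1 M2]].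
    { rewrite (post3 RT1), CC1. symmetry. exact Hv2. }
    { rewrite (post3 RT2), CC2. symmetry. exact mu_vc. }
    exists mtS.
    assert (MS1 : s1 ∘ mtS = n ∘ c ∘ q1).
    { unfold s1. rewrite <- comp_assoc, M1, comp_assoc, T1, <- comp_assoc, CC1, comp_assoc.
      reflexivity. }
    assert (MS2 : s2 ∘ mtS = n ∘ c ∘ q2).
    { unfold s2. rewrite <- comp_assoc, M1, comp_assoc, T2, <- comp_assoc, CC2, comp_assoc.
      reflexivity. }
    split; [exact MS1|]. split; [exact MS2|]. split; [exact MS1|].
    intros Q qa qb E. unfold s1 in E.
    destruct (pb_pair Hpb (sgR ∘ qa) (c ∘ qb)) as [h1 [H11 H12]].
    { rewrite comp_assoc, E, comp_assoc. reflexivity. }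
    destruct (pb_pair Sx_pb (sgX ∘ qa) qb) as [h2 [H21 H22]].
    { rewrite comp_assoc, <- S1, <- !comp_assoc, <- H11, (post3 RT1). exact H12. }
    exists h2. split.
    + split; [|exact H22].
      apply (pb_ext HS).
      * assert (Ecc : cc ∘ h2 = h1).
        { apply (prod_ext Hpn).
          - rewrite comp_assoc, CC1, <- comp_assoc, H22. symmetry. exact H12.
          - rewrite comp_assoc, CC2, <- (post mu_vc), H21, comp_assoc, <- S2,
              <- !comp_assoc, <- H11, (post3 RT2). reflexivity. }
        rewrite comp_assoc, M1, <- comp_assoc, Ecc. exact H11.
      * rewrite comp_assoc, M2. exact H21.
    + intros h' [H1 H2]. apply (pb_ext Sx_pb).
      * rewrite H21, <- M2, <- comp_assoc, H1. reflexivity.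
      * rewrite H22, H2. reflexivity.
Qed.

Lemma final_iff :
  ((exists (B A : C) (k' : hom GX A) (p' : hom A B) (i' : hom B A),
       is_generic_split_ext k' p' i') /\ is_characteristic_mono c)
  <-> (trivial_center X /\ strong_complete GX).
Proof.
  split.
  - intros [_ Hch]. split. apply A3, A2, Hch. apply B_part, Hch.
  - intros [Htc Hsc]. split. apply C1, Hsc. apply C2; [apply C0, Htc | exact Hsc].
Qed.

End Main.
End Gen.

Theorem theorem5p5 (C : Cat) (HC0 : pointed C) (HCl : has_finite_limits C)
  (HCp : protomodular C) (X GX SX : ob C) (k : hom X SX) (p1 : hom SX GX)
  (i : hom GX SX) (Hgen : is_generic_split_ext k p1 i)
  (c : hom X GX) (Hc : is_conjugation k p1 i c) :
  ((exists (B A : ob C) (k' : hom GX A) (p' : hom A B) (i' : hom B A),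
       is_generic_split_ext k' p' i') /\ is_characteristic_mono c)
  <-> (trivial_center X /\ strong_complete GX).
Proof.
  destruct HC0 as [Z0 HZ]. destruct HCl as [_ HPB].
  destruct Hc as [XX [q1 [q2 [Hq [d01 [dd [vc [Ha [Hb [Hc1 [Hc2 [Hv1 [Hv2 Hv3]]]]]]]]]]]]].
  destruct (mu_ex Z0 HZ HPB X GX SX k p1 i Hgen c XX q1 q2 Hq d01 dd vc Ha Hb Hc1 Hc2 Hv1 Hv2 Hv3)
    as [mu [Hmk Hmi]].
  exact (final_iff Z0 HZ HPB HCp X GX SX k p1 i Hgen c XX q1 q2 Hq d01 dd vc Ha Hb Hc1 Hc2
    Hv1 Hv2 Hv3 mu Hmk Hmi).
Qed.
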